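(* For every $n \geq 1$, the number of permutations of $\{1,\ldots,n\}$ having exactly one fixed point equals $D_n$.
   Context: A linear arrangement of $\{1,\ldots,n\}$ is a sequence $a_1\cdots a_n$ in which each of $1,\ldots,n$ appears exactly once. It contains the pattern $ij$ if $a_t=i$ and $a_{t+1}=j$ for some $t$; otherwise it avoids it. $D_n$ is the number of linear arrangements of $\{1,\ldots,n\}$ avoiding all of the patterns $12, 23, \ldots, (n-1)n, n1$. *)

(* Defs.v *)
From mathcomp Require Import all_boot all_fingroup.
Set Implicit Arguments. Unset Strict Implicit. Unset Printing Implicit Defensive.

(* Elements of {1,...,n} are encoded as ordinals 'I_n, i.e. the value k
   represents the label k+1. *)

(* Cyclic successor on the labels: i |-> i+1 for i < n, and n |-> 1.
   In the 'I_n encoding this is ordS (k |-> (k+1) mod n). *)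
Definition cyc_succ n (i : 'I_n) : 'I_n := ordS i.

Definition linear_arrangement n (s : n.-tuple 'I_n) : bool := uniq s.

Definition contains_pattern n (s : seq 'I_n) (i j : 'I_n) : bool :=
  has (fun t => (nth i s t == i) && (nth i s t.+1 == j)) (iota 0 (size s).-1).

Definition avoids_cyclic n (s : seq 'I_n) : bool :=
  [forall i : 'I_n, ~~ contains_pattern s i (cyc_succ i)].

Definition D n : nat :=
  #|[set s : n.-tuple 'I_n | linear_arrangement s && avoids_cyclic s]|.

Definition nfix n (p : {perm 'I_n}) : nat := #|[set i : 'I_n | p i == i]|.

(* Main.v *)
Require Import Defs.
From mathcomp Require Import all_boot all_order all_algebra all_fingroup.
From mathcomp Require Import zify.
Set Implicit Arguments. Unset Strict Implicit. Unset Printing Implicit Defensive.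
Import GRing.Theory Num.Theory.

Section Glue.
Variable T : eqType.

Fixpoint adj (a b : T) (s : seq T) : bool :=
  if s is c :: s' then ((c == a) && (ohead s' == Some b)) || adj a b s' else false.

Lemma adj_mem a b s : adj a b s -> (a \in s) && (b \in s).
Proof.
elim: s => //= c s IH /orP [/andP [/eqP -> ]|/IH /andP [H1 H2]].
  by case: s {IH} => //= d s /eqP [->]; rewrite !inE !eqxx ?orbT.
by rewrite !inE H1 H2 ?orbT.
Qed.

Lemma adj_last a b c s : uniq (c :: s) -> adj a b (c :: s) -> a != last c s.
Proof.
elim: s c => [|d s IH] c //=.
  by rewrite orbF andbF.
move=> /andP [cnin /andP [dnin us]] /orP [/andP [/eqP <- /eqP [_]]|H].
  by apply/eqP=> E; move: cnin; rewrite E mem_last.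
by apply: IH; rewrite //= dnin.
Qed.

Section InsDel.
Variables x y : T.
Hypothesis xy : x != y.

Fixpoint ins (s : seq T) : seq T :=
  if s is c :: s' then (if c == x then c :: y :: ins s' else c :: ins s') else [::].
Definition del (s : seq T) := filter (predC1 y) s.

Lemma ins_id s : x \notin s -> ins s = s.
Proof.
elim: s => //= c s IH; rewrite inE negb_or => /andP [cx /IH ->].
by rewrite eq_sym (negbTE cx).
Qed.

Lemma del_id s : y \notin s -> del s = s.
Proof.
move=> H; apply/all_filterP/allP => z zs /=; apply/eqP => E.
by move: H; rewrite -E zs.
Qed.

Lemma del_ins s : del (ins s) = del s.
Proof.
elim: s => //= c s IH; case: ifP => cx /=.
  by rewrite eqxx /= IH (eqP cx) xy.
by rewrite IH.
Qed.

Lemma head_ins s : ohead (ins s) = ohead s.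
Proof. by case: s => //= c s; case: ifP. Qed.

Lemma adj_ins a b s : a != x -> a != y -> b != y -> adj a b (ins s) = adj a b s.
Proof.
move=> ax ay bY; elim: s => //= c s IH; case: ifP => cx /=.
  rewrite (eqP cx) eq_sym (negbTE ax) /= eq_sym (negbTE ay) /= IH.
  by [].
by rewrite head_ins IH.
Qed.

Lemma adj_ins_xy s : adj x y (ins s) = (x \in s).
Proof.
elim: s => //= c s IH; case: ifP => cx /=.
  by rewrite (eqP cx) !eqxx inE eqxx.
by rewrite cx IH inE (eq_sym x) cx.
Qed.

Lemma ins_del s : uniq s -> adj x y s -> ins (del s) = s.
Proof.
elim: s => //= c s IH /andP [cs us].
case: (eqVneq c y) => [cy|cy].
  rewrite cy => /orP [/andP [/eqP yx _]|/adj_mem /andP [_ ys]].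
    by move: xy; rewrite yx eqxx.
  by rewrite cy ys in cs.
rewrite /=; case: (eqVneq c x) => [cx|cx] /=.
  case: s cs us {IH} => [|d s] //=.
  rewrite !inE negb_or => /andP [cd cs] /andP [ds us] /orP [/eqP [dy]|H].
    rewrite dy eqxx /= del_id; last by rewrite -dy.
    by rewrite ins_id // -cx.
  case/orP: H => [/andP [/eqP dx _]|/adj_mem/andP [H _]].
    by move: cd; rewrite dx cx eqxx.
  by move: cs; rewrite cx H.
by move=> H; rewrite IH.
Qed.

Lemma perm_ins s : uniq s -> x \in s -> perm_eq (ins s) (y :: s).
Proof.
elim: s => //= c s IH /andP [cs us]; rewrite inE.
have swap : forall (u v : T) w, perm_eq (u :: v :: w) (v :: u :: w).
  by move=> u v w; apply/seq.permP => p /=; rewrite addnCA.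
case: ifP => cx.
  by rewrite ins_id ?(eqP cx) -?(eqP cx) //; rewrite swap.
rewrite eq_sym cx /= => xs.
apply: perm_trans (swap _ _ _); rewrite perm_cons; exact: IH.
Qed.

Lemma glue_step U (Q : pred (seq T)) :
  uniq U -> x \in U -> y \in U -> (forall t, Q (ins t) = Q t) ->
  count (fun s => adj x y s && Q s) (permutations U) = count Q (permutations (del U)).
Proof.
move=> uU xU yU HQ; rewrite -!size_filter.
set A := filter _ (permutations U).
set B := filter _ (permutations (del U)).
have uA : {in A, forall s, uniq s /\ adj x y s /\ Q s /\ perm_eq s U}.
  move=> s; rewrite mem_filter mem_permutations => /andP [/andP [H1 H2] H3].
  by split; [rewrite (perm_uniq H3) | ].
have -> : size A = size (map del A) by rewrite size_map.
apply/perm_size/uniq_perm.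
- rewrite map_inj_in_uniq; first by rewrite filter_uniq // permutations_uniq.
  move=> s1 s2 /uA [u1 [a1 _]] /uA [u2 [a2 _]] E.
  by rewrite -(ins_del u1 a1) -(ins_del u2 a2) E.
- by rewrite filter_uniq // permutations_uniq.
move=> t; apply/mapP/idP.
  case=> s /uA [us [axy [Qs ps]]] ->; rewrite mem_filter mem_permutations.
  rewrite -HQ ins_del // Qs /=.
  exact: perm_filter.
rewrite mem_filter mem_permutations => /andP [Qt pt].
have udU : uniq (del U) by rewrite filter_uniq.
have ut : uniq t by rewrite (perm_uniq pt).
have xt : x \in t by rewrite (perm_mem pt) mem_filter /= xU andbT.
have yt : y \notin t by rewrite (perm_mem pt) mem_filter /= eqxx.
exists (ins t); last by rewrite del_ins del_id.
rewrite mem_filter mem_permutations adj_ins_xy xt HQ Qt /=.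
apply: perm_trans (perm_ins ut xt) _.
rewrite perm_sym; apply: perm_trans (perm_to_rem yU) _.
by rewrite perm_cons rem_filter // perm_sym.
Qed.

End InsDel.

Definition adjs (P : seq (T * T)) s := all (fun p => adj p.1 p.2 s) P.

Lemma max_exists (A : eqType) (f : A -> nat) (P : seq A) :
  P != [::] -> exists2 p, p \in P & forall q, q \in P -> f q <= f p.
Proof.
elim: P => // a P IH _.
case: (eqVneq P [::]) => [->|/IH [p pP H]].
  by exists a; [rewrite inE | move=> q; rewrite inE => /eqP ->].
case: (leqP (f a) (f p)) => H'.
  exists p; first by rewrite inE pP orbT.
  by move=> q; rewrite inE => /orP [/eqP -> //|/H].
exists a; first by rewrite inE eqxx.
move=> q; rewrite inE => /orP [/eqP -> //|/H Hq].
exact: leq_trans Hq (ltnW H').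
Qed.

Lemma glue (r : T -> nat) k : forall (P : seq (T * T)) U, size P = k -> uniq U ->
  uniq (unzip1 P) -> uniq (unzip2 P) ->
  (forall p, p \in P -> [&& p.1 != p.2, p.1 \in U, p.2 \in U & r p.1 < r p.2]) ->
  count (adjs P) (permutations U) = (size U - k)`!.
Proof.
elim: k => [|k IH] P U.
  move/size0nil -> => uU _ _ _.
  have -> : count (adjs [::]) (permutations U) = count predT (permutations U).
    by apply: eq_count.
  by rewrite count_predT size_permutations // subn0.
move=> sP uU u1 u2 HP.
have P0 : P != [::] by case: P sP {u1 u2 HP}.
have [[x y] pP pmax] := max_exists (fun p : T * T => r p.1) P0.
have /and4P [/= xy xU yU rxy] := HP _ pP.
simpl in xU, yU, rxy.
set P' := rem (x, y) P.
have pe : perm_eq P ((x, y) :: P') := perm_to_rem pP.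
have e1 : perm_eq (unzip1 P) (x :: unzip1 P') := perm_map _ pe.
have e2 : perm_eq (unzip2 P) (y :: unzip2 P') := perm_map _ pe.
have /andP [xn1 u1'] : uniq (x :: unzip1 P') by rewrite -(perm_uniq e1).
have /andP [yn2 u2'] : uniq (y :: unzip2 P') by rewrite -(perm_uniq e2).
change (is_true (uniq (unzip1 P'))) in u1'; change (is_true (uniq (unzip2 P'))) in u2'.
have memP' q : q \in P' -> q \in P := fun h => mem_rem h.
have qny q : q \in P' -> [&& q.1 != x, q.1 != y & q.2 != y].
  move=> qP'; apply/and3P; split.
  - by apply/eqP => E; move: xn1; rewrite -E (map_f _ qP').
  - apply/eqP => E; have := pmax q (memP' _ qP'); rewrite E /=.
    by rewrite leqNgt rxy.
  - by apply/eqP => E; move: yn2; rewrite -E (map_f _ qP').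
have -> : count (adjs P) (permutations U) =
          count (fun s => adj x y s && adjs P' s) (permutations U).
  by apply: eq_count => s; rewrite /adjs (perm_all _ pe).
rewrite (glue_step xy) //; last first.
  move=> t; apply: eq_in_all => q qP'.
  by case/and3P: (qny q qP') => H1 H2 H3; apply: adj_ins.
have sdU : size (del y U) = (size U).-1 by rewrite /del -rem_filter // size_rem.
rewrite (IH P') //.
- by rewrite sdU -subn1 -subnDA add1n.
- by rewrite size_rem // sP.
- by rewrite filter_uniq.
move=> q qP'; case/and3P: (qny q qP') => H1 H2 H3.
have /and4P [-> q1U q2U ->] := HP q (memP' _ qP').
by rewrite !mem_filter /= H2 H3 q1U q2U.
Qed.
End Glue.


Section IE.
Local Open Scope ring_scope.

Lemma alt_sum (I : finType) (B : {set I}) :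
  \sum_(S : {set I} | S \subset B) (-1) ^+ #|S| = (B == set0)%:R :> int.
Proof.
case: (set_0Vmem B) => [->|[a aB]].
  rewrite eqxx (big_pred1 set0) ?cards0 ?expr0 //.
  by move=> S; rewrite /= subset0.
have -> : (B == set0) = false by apply/negbTE/set0Pn; exists a.
pose h (S : {set I}) := if a \in S then S :\ a else a |: S.
have hK : involutive h.
  move=> S; rewrite /h; case: (boolP (a \in S)) => aS.
    rewrite !inE eqxx /= setD1K //.
  by rewrite setU11 setU1K.
set s := \sum_(S | _) _.
have : s = - s.
  rewrite {1}/s (reindex_inj (inv_inj hK)) /= /s -sumrN.
  apply: eq_big => S.
    rewrite /h; case: (boolP (a \in S)) => aS.
      apply/idP/idP => H.
        by rewrite -(setD1K aS) subUset sub1set aB H.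
      exact: subset_trans (subD1set S a) H.
    by rewrite subUset sub1set aB.
  move=> _; rewrite /h; case: (boolP (a \in S)) => aS.
    by rewrite [#|S|](cardsD1 a) aS add1n exprS mulN1r opprK.
  by rewrite cardsU1 aS add1n exprS mulN1r.
move=> E; clearbody s; lia.
Qed.

Lemma card_sum (X : finType) (P : pred X) :
  (#|[set x | P x]|%:R = \sum_x (P x)%:R :> int).
Proof.
rewrite cardsE -sum1_card natr_sum big_mkcond /=.
by apply: eq_bigr => x _; rewrite unfold_in; case: (P x).
Qed.

Lemma incl_excl (X I : finType) (Dm : pred X) (E : I -> pred X) :
  #|[set x | Dm x && [forall i, ~~ E i x]]|%:R =
  \sum_(S : {set I}) (-1) ^+ #|S| * #|[set x | Dm x && [forall i in S, E i x]]|%:R :> int.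
Proof.
rewrite (card_sum (fun x => Dm x && [forall i, ~~ E i x])).
symmetry; under eq_bigr => S _ do rewrite (card_sum (fun x => Dm x && [forall i in S, E i x])) mulr_sumr.
rewrite exchange_big /=; symmetry; apply: eq_bigr => x _.
pose B := [set i | E i x].
have H1 (S : {set I}) : [forall i in S, E i x] = (S \subset B).
  apply/forall_inP/idP => H.
    by apply/subsetP => i iS; rewrite inE H.
  by move=> i iS; have := subsetP H i iS; rewrite inE.
have H2 : [forall i, ~~ E i x] = (B == set0).
  apply/forallP/eqP => [H|H i].
    by apply/setP => i; rewrite !inE (negbTE (H i)).
  by have := congr1 (fun A : {set I} => i \in A) H; rewrite /= !inE => ->.
rewrite H2; case: (Dm x) => /=; last by rewrite big1 // => S _; rewrite mulr0.
rewrite -alt_sum big_mkcond /=; apply: eq_bigr => S _.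
by rewrite H1; case: (S \subset B); rewrite ?mulr1 ?mulr0.
Qed.
End IE.


Section Cside.
Local Open Scope ring_scope.

Lemma E_side n :
  #|[set p : {perm 'I_n} | nfix p == 1%N]|%:R =
  \sum_(S : {set 'I_n}) (-1) ^+ #|S| * (#|~: S| * (n - #|S|.+1)`!)%:R :> int.
Proof.
pose Af (f : 'I_n) := [set p : {perm 'I_n} | (p f == f) && [forall i, ~~ ((i != f) && (p i == i))]].
have step1 : #|[set p : {perm 'I_n} | nfix p == 1%N]|%:R = \sum_f #|Af f|%:R :> int.
  rewrite (card_sum (fun p : {perm 'I_n} => nfix p == 1%N)).
  under [RHS]eq_bigr => f _ do rewrite (card_sum (fun p : {perm 'I_n} => (p f == f) && [forall i, ~~ ((i != f) && (p i == i))])).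
  rewrite [RHS]exchange_big /=; apply: eq_bigr => p _.
  rewrite -(card_sum (fun f => (p f == f) && [forall i, ~~ ((i != f) && (p i == i))])).
  congr (_ %:R).
  have eA f : ((p f == f) && [forall i, ~~ ((i != f) && (p i == i))]) =
              ([set i | p i == i] == [set f]).
    apply/andP/eqP => [[pf /forallP H]|H].
      apply/setP => i; rewrite !inE; apply/idP/eqP => [pi|->//].
      by apply/eqP; have := H i; rewrite pi andbT negbK.
    split; first by have := congr1 (fun A : {set 'I_n} => f \in A) H; rewrite /= !inE eqxx.
    apply/forallP => i; have := congr1 (fun A : {set 'I_n} => i \in A) H; rewrite /= !inE => ->.
    by rewrite andNb.
  under eq_finset => f do rewrite eA.
  rewrite /nfix; case: (boolP (#|[set i | p i == i]| == 1%N)) => H.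
    case/cards1P: H => f0 ->.
    have -> : [set f | [set f0] == [set f]] = [set f0].
      by apply/setP => f; rewrite !inE eqEcard !cards1 sub1set !inE andbT eq_sym.
    by rewrite cards1.
  apply/eqP; rewrite eq_sym cards_eq0; apply/eqP/setP => f; rewrite !inE.
  by apply/negP => /eqP E; move: H; rewrite E cards1.
rewrite step1.
have step2 (f : 'I_n) (S : {set 'I_n}) :
    #|[set p : {perm 'I_n} | (p f == f) && [forall i in S, (i != f) && (p i == i)]]| =
    ((f \notin S) * (n - #|S|.+1)`!)%N.
  case: (boolP (f \in S)) => fS /=.
    apply/eqP; rewrite mul0n cards_eq0; apply/eqP/setP => p; rewrite !inE.
    case: (p f == f) => //=; apply/negP => /forall_inP /(_ f fS).
    by rewrite eqxx.
  rewrite mul1n.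
  have -> : #|[set p : {perm 'I_n} | (p f == f) && [forall i in S, (i != f) && (p i == i)]]| =
            #|perm_on (~: (f |: S))|.
    apply: eq_card => p; rewrite inE; apply/idP/idP.
      case/andP => pf /forall_inP H; apply/subsetP => x; rewrite !inE => px.
      apply/negP => /orP [/eqP xf|xS].
        by move: px; rewrite xf pf.
      by case/andP: (H x xS) => _ pxx; move: px; rewrite pxx.
    move=> H.
    have fo x : x \in f |: S -> p x = x.
      by move=> xS; apply: (out_perm H); rewrite inE negbK.
    rewrite (fo f) ?setU11 ?eqxx //=.
    apply/forall_inP => i iS; rewrite (fo i) ?eqxx ?andbT; last by rewrite !inE iS orbT.
    by apply/eqP => E; move: fS; rewrite -E iS.
  rewrite card_perm; congr (_ `!).
  have gen : forall a b c : nat, (a.+1 + b)%N = c -> b = (c - a.+1)%N by move=> *; lia.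
  by apply: gen; have := cardsC (f |: S); rewrite cardsU1 fS card_ord add1n.
under eq_bigr => f _ do rewrite (incl_excl (fun p : {perm 'I_n} => p f == f)
                       (fun i p => (i != f) && (p i == i))).
under eq_bigr => f _ do under eq_bigr => S _ do rewrite step2.
rewrite exchange_big /=; apply: eq_bigr => S _.
rewrite -mulr_sumr; congr (_ * _).
under eq_bigr => f _ do rewrite natrM.
rewrite -mulr_suml natrM; congr (_ * _).
rewrite -(card_sum (fun f => f \notin S)); congr (_ %:R); apply: eq_card => f.
Qed.
End Cside.

Lemma cp_adj n (s : seq 'I_n) (i j : 'I_n) : contains_pattern s i j = adj i j s.
Proof.
rewrite /contains_pattern; elim: s => [|c s IH] //=.
case: s IH => [|d s] IH; first by rewrite /= andbF.
rewrite [LHS]/= -[RHS]/(((c == i) && (Some d == Some j)) || adj i j (d :: s)) -IH.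
rewrite /= (iotaDl 1 0) has_map /=.
have -> : (Some d == Some j) = (d == j) by apply/eqP/eqP => [[]|->].
by [].
Qed.

Lemma bridge n (Q : pred (seq 'I_n)) :
  #|[set s : n.-tuple 'I_n | uniq s && Q s]| = count Q (permutations (enum 'I_n)).
Proof.
rewrite cardE -size_filter -(size_map val).
apply/perm_size/uniq_perm.
- by rewrite map_inj_uniq ?enum_uniq //; apply: val_inj.
- by rewrite filter_uniq // permutations_uniq.
move=> l; apply/mapP/idP.
  case=> s; rewrite mem_enum inE => /andP [us Qs] ->.
  rewrite mem_filter Qs mem_permutations /=.
  have [_ E] := uniq_min_size us (fun x _ => mem_enum _ x)
                  (eq_leq (etrans (size_enum_ord n) (esym (size_tuple s)))).
  by apply: uniq_perm => //; apply: enum_uniq.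
rewrite mem_filter mem_permutations => /andP [Ql pl].
have sl : size l == n by rewrite (perm_size pl) size_enum_ord.
exists (Tuple sl) => //.
by rewrite mem_enum inE /= (perm_uniq pl) enum_uniq Ql.
Qed.

Lemma NS_val n (S : {set 'I_n}) : 0 < n ->
  count (fun l => [forall i in S, adj i (ordS i) l]) (permutations (enum 'I_n)) =
  if S == setT then 0 else (n - #|S|)`!.
Proof.
move=> n0; case: eqP => [->|/eqP ST].
  apply/eqP; rewrite -leqn0 leqNgt -has_count; apply/hasPn => l.
  rewrite mem_permutations => pl.
  have ul : uniq l by rewrite (perm_uniq pl) enum_uniq.
  case: l pl ul => [|c l] pl ul.
    by move: (perm_size pl); rewrite size_enum_ord => E; rewrite -E in n0.
  apply/negP => /forall_inP /(_ (last c l) (in_setT _)) /(adj_last ul).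
  by rewrite eqxx.
have [j jS] : exists j, j \notin S.
  case: (pickP (fun j => j \notin S)) => [j jS|H]; first by exists j.
  case/eqP: ST; apply/setP => j; have := H j; rewrite !inE /=.
  by move/negbFE.
pose r (v : 'I_n) := if (j < v)%N then (v - j.+1)%N else (v + n - j.+1)%N.
have Hr (i : 'I_n) : i != j -> (r i < r (ordS i))%N.
  move=> ij; have ij' : (i : nat) <> j by move=> E; case/eqP: ij; apply: val_inj.
  rewrite /r /=; have := ltn_ord i; have := ltn_ord j.
  case: (ltngtP i.+1 n) => h.
  - rewrite modn_small //.
    by do ?[case: ifP => ?]; move=> *; lia.
  - by move=> *; lia.
  - rewrite h modnn ltn0 /=.
    by do ?[case: ifP => ?]; move=> *; lia.
pose P := [seq (i, ordS i) | i <- enum S].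
have eqQ : (fun l => [forall i in S, adj i (ordS i) l]) =1 adjs P.
  move=> l; rewrite /adjs all_map; apply/forall_inP/allP => H i iS.
    by apply: H; rewrite -mem_enum.
  by apply: H; rewrite mem_enum.
rewrite (eq_count eqQ).
rewrite (@glue _ r #|S|) ?size_enum_ord ?enum_uniq //.
- by rewrite size_map cardE.
- have -> : unzip1 P = enum S by rewrite /P; elim: (enum S) => //= a l ->.
  exact: enum_uniq.
- have -> : unzip2 P = map (@ordS n) (enum S) by rewrite /P; elim: (enum S) => //= a l ->.
  by rewrite map_inj_uniq ?enum_uniq //; apply: ordS_inj.
move=> p /mapP [i iS ->] /=.
have ij : i != j by apply/eqP => E; move: jS; rewrite -E -mem_enum iS.
rewrite (Hr i ij) !mem_enum !andbT.
by apply/eqP => E; have := Hr i ij; rewrite -E ltnn.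
Qed.

Section Dside.
Local Open Scope ring_scope.

Lemma D_side n : (0 < n)%N ->
  (D n)%:R = \sum_(S : {set 'I_n}) (-1) ^+ #|S| *
     (if S == setT then 0 else (n - #|S|)`!)%:R :> int.
Proof.
move=> n0; rewrite /D /linear_arrangement /avoids_cyclic.
have := incl_excl (fun s : n.-tuple 'I_n => uniq s)
           (fun i s => contains_pattern s i (cyc_succ i)).
move=> /= ->; apply: eq_bigr => S _; congr (_ * _ %:R).
rewrite -(NS_val S n0) -bridge; apply: eq_card => s; rewrite !inE.
congr (_ && _); apply: eq_forallb => i.
by rewrite cp_adj.
Qed.
End Dside.

Theorem proposition6p1 (n : nat) (hn : 1 <= n) :
  #|[set p : {perm 'I_n} | nfix p == 1]| = D n.
Proof.
apply/eqP; rewrite -(eqr_nat int) E_side D_side //; apply/eqP.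
apply: eq_bigr => S _; congr (_ * _ %:R)%R.
case: eqP => [->|/eqP ST]; first by rewrite setCT cards0.
have cS : #|~: S| = (n - #|S|)%N.
  have gen : forall a b c : nat, (a + b)%N = c -> b = (c - a)%N by move=> *; lia.
  by apply: gen; rewrite cardsC card_ord.
have pos : (0 < #|~: S|)%N.
  rewrite card_gt0; apply: contra ST => /eqP H.
  by rewrite -[S]setCK H setC0.
move: pos; rewrite cS; case E: (n - #|S|)%N => [|m] //= _.
by rewrite subnS E /= factS.
Qed.
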